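(* Let $t\geqslant 2$ be an integer, let $r\in\{2t,2t+1\}$, and set $\ell^*=5$ if $r=2t$ and $\ell^*=7$ if $r=2t+1$. Then for every $n\geqslant 2r-1$, $$I(n,2r-1,r)\geqslant 2\binom{2t-3}{t}+\ell^*\binom{2t-2}{t-1}.$$ Moreover, for every $n\geqslant 2r$, $$N(n,2r-1,r)=I(n,2r-1,r)\geqslant N(n,2r,r),$$ and consequently $N(n,2r-1,r)\geqslant 2\binom{2t-3}{t}+\ell^*\binom{2t-2}{t-1}$.
   Context: $\mathrm{Sym}_n$ is the symmetric group of permutations of $[n]=\{1,\dots,n\}$. The Hamming distance between $\pi,\tau\in\mathrm{Sym}_n$ is $d(\pi,\tau)=|\{i\in[n]:\pi(i)\neq\tau(i)\}|$, and $B_r(\pi)=\{\tau\in\mathrm{Sym}_n: d(\pi,\tau)\leqslant r\}$. For integers $d,r$, $I(n,d,r)=\max_{\pi,\tau\in\mathrm{Sym}_n,\ d(\pi,\tau)=d}|B_r(\pi)\cap B_r(\tau)|$ and $N(n,d,r)=\max_{\pi,\tau\in\mathrm{Sym}_n,\ d(\pi,\tau)\geqslant d}|B_r(\pi)\cap B_r(\tau)|$. Binomial convention: $\binom{0}{0}=1$ and $\binom{p}{q}=0$ whenever $p<q$, $p<0$ or $q<0$. *)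

(* Defs.v *)
From mathcomp Require Import all_boot all_order all_fingroup.
Set Implicit Arguments. Unset Strict Implicit. Unset Printing Implicit Defensive.

(* Sym_n is {perm 'I_n} : permutations of {0,...,n-1} (a relabelling of [n]). *)

Definition hdist (n : nat) (p q : {perm 'I_n}) : nat := #|[set i | p i != q i]|.

Definition hball (n r : nat) (p : {perm 'I_n}) : {set {perm 'I_n}} :=
  [set q | hdist p q <= r].

(* I(n,d,r): max over pairs at distance exactly d of |B_r(pi) ∩ B_r(tau)|
   (0 if no such pair exists). *)
Definition Ival (n d r : nat) : nat :=
  \max_(pq : {perm 'I_n} * {perm 'I_n} | hdist pq.1 pq.2 == d)
     #|hball r pq.1 :&: hball r pq.2|.

Definition Nval (n d r : nat) : nat :=
  \max_(pq : {perm 'I_n} * {perm 'I_n} | d <= hdist pq.1 pq.2)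
     #|hball r pq.1 :&: hball r pq.2|.

(* Main.v *)
Require Import Defs.
From mathcomp Require Import all_boot all_order all_fingroup.
From mathcomp Require Import zify.
Set Implicit Arguments. Unset Strict Implicit. Unset Printing Implicit Defensive.


Section Basic.
Variable n : nat.
Implicit Types p q s g : {perm 'I_n}.

Lemma hdistE p q : hdist p q = \sum_i (p i != q i).
Proof.
rewrite /hdist cardsE -sum1_card big_mkcond /=.
by apply: eq_bigr => i _; rewrite unfold_in; case: (p i != q i).
Qed.

Lemma hdistC p q : hdist p q = hdist q p.
Proof. by rewrite !hdistE; apply: eq_bigr => i _; rewrite eq_sym. Qed.

Lemma hdist_tri p q s : hdist p q <= hdist p s + hdist s q.
Proof.
rewrite !hdistE -big_split /=; apply: leq_sum => i _.
case: (p i =P q i) => // Hpq; case: (p i =P s i) => [Hps|]; last by [].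
by rewrite Hps in Hpq; case: (s i =P q i).
Qed.

Lemma hdist_mulr p q g : hdist (p * g) (q * g) = hdist p q.
Proof. by rewrite !hdistE; apply: eq_bigr => i _; rewrite !permM (inj_eq perm_inj). Qed.

Lemma sum_ind (j : 'I_n) : \sum_i ((i == j) : nat) = 1.
Proof. by rewrite (bigD1 j) //= eqxx big1 // => i /negbTE ->. Qed.

Lemma sum_lt (F G : 'I_n -> nat) j :
  (forall i, F i <= G i) -> F j < G j -> \sum_i F i < \sum_i G i.
Proof.
move=> H Hj; rewrite (bigD1 j) //= [X in _ < X](bigD1 j) //=.
by rewrite -addSn; apply: leq_add => //; apply: leq_sum => i _; exact: H.
Qed.

Lemma far_mem p q s r : hdist p q = 2 * r -> hdist p s <= r -> hdist s q <= r ->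
  [/\ forall i, (s i == p i) || (s i == q i), hdist p s = r & hdist s q = r].
Proof.
move=> Hpq Hps Hsq.
have H : \sum_i ((p i != q i) + ((s i != p i) && (s i != q i)))
      <= \sum_i ((p i != s i) + (s i != q i)).
  apply: leq_sum => i _; rewrite [p i == s i]eq_sym.
  case E1: (s i == p i); case E2: (s i == q i); case E3: (p i == q i) => //=;
  move/eqP: E1 => E1; move/eqP: E2 => E2; move/eqP: E3 => E3; congruence.
rewrite !big_split /= -!hdistE in H.
move: H; set B := (\sum_(i < n) _) => H.
have Hb : B = 0 by lia.
split; try lia.
move=> i; move/eqP: Hb; rewrite /B sum_nat_eq0 => /forallP /(_ i) /implyP /(_ isT).
by case: (s i == p i); case: (s i == q i).
Qed.

Lemma far_empty p q r : 2 * r < hdist p q -> #|hball r p :&: hball r q| = 0.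
Proof.
move=> H; apply/eqP; rewrite cards_eq0; apply/eqP/setP => s; rewrite !inE.
apply/negbTE/negP => /andP [H1 H2]; rewrite hdistC in H2.
have := hdist_tri p q s; lia.
Qed.

End Basic.


Section CaseA.
Variable n : nat.
Implicit Types p q s g : {perm 'I_n}.

Lemma inj_neq p (x y : 'I_n) : (p x != p y) = (x != y).
Proof. by rewrite (inj_eq perm_inj). Qed.

Lemma caseA p q r j : hdist p q = 2 * r -> p j != q j -> p ((q^-1)%g (p j)) != q j ->
  hdist p (q * tperm (p j) (q j))%g = (2 * r).-1 /\
  #|hball r p :&: hball r q| <= #|hball r p :&: hball r (q * tperm (p j) (q j))%g|.
Proof.
move=> Hpq Hj Hk.
set a := p j in Hj Hk *; set b := q j in Hj Hk *; set g := tperm a b.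
set q' := (q * g)%g.
set k := (q^-1)%g a in Hk.
have Hqk : q k = a by rewrite /k permKV.
have Hq'E : forall i, q' i = g (q i) by move=> i; rewrite permM.
have Hkj : k != j by apply/eqP => Ek; move: Hj; rewrite /b -Ek Hqk eqxx.
split.
  have Hpt : forall i, (p i != q' i) + (i == j) = (p i != q i).
    move=> i; rewrite Hq'E.
    case: (i =P j) => [->|Hij].
      by rewrite -/b /g tpermR -/a eqxx /= Hj.
    have Hqib : q i != b by rewrite /b inj_neq; apply/eqP.
    case: (q i =P a) => [Hqia|Hqia].
      have Eik : i = k by apply: (perm_inj (s:=q)); rewrite Hqk.
      by rewrite Hqia /g tpermL addn0 Eik Hk /a inj_neq // Hkj.
    rewrite /g; rewrite tpermD ?addn0 // eq_sym //; by apply/eqP.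
  have : \sum_i ((p i != q' i) + (i == j) : nat) = \sum_i ((p i != q i) : nat) by apply: eq_bigr => i _; exact: Hpt.
  rewrite big_split /= sum_ind -!hdistE; lia.
pose F s := if s j == a then s else (s * g)%g.
set S := hball r p :&: hball r q.
set S' := hball r p :&: hball r q'.
have key : forall s, s \in S -> F s \in S' /\ (hdist (F s) q' < r) = (s j == a).
  move=> s; rewrite !inE => /andP [Hps Hqs]; rewrite hdistC in Hqs.
  have [Hor Hps' Hsq'] := far_mem Hpq Hps Hqs.
  rewrite /F; case: ifP => Hsj.
    have Hlt : hdist s q' < hdist s q.
      rewrite !hdistE; apply: (sum_lt (j := j)).
        move=> i; rewrite Hq'E.
        case: (q i =P a) => [Hqia|Hqia].
          rewrite Hqia; case: (s i =P a) => [Hsia|/eqP Hsa]; last by case: (_ != _).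
          have Eij : i = j by apply: (perm_inj (s:=s)); rewrite Hsia; apply/esym/eqP.
          by move: Hj; rewrite /b -Eij Hqia eqxx.
        case: (q i =P b) => [Hqib|Hqib].
          have Eij : i = j by apply: (perm_inj (s:=q)); rewrite Hqib.
          by rewrite Hqib /g tpermR Eij (eqP Hsj) eqxx.
        by rewrite /g tpermD // eq_sym; apply/eqP.
      by rewrite Hq'E -/b /g tpermR; move/eqP: Hsj => ->; rewrite eqxx /= Hj.
    rewrite Hps /= [hdist q' s]hdistC; split; [lia|apply/idP; lia].
  have Hsjb : s j = b by move: (Hor j); rewrite Hsj /= => /eqP.
  have Hlt : hdist p (s * g)%g < hdist p s.
    rewrite !hdistE; apply: (sum_lt (j := j)).
      move=> i; rewrite permM.
      case: (s i =P a) => [Hsia|Hsia].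
        have Hij : i != j by apply/eqP => Eij; move: Hsj; rewrite -Eij Hsia eqxx.
        by rewrite Hsia /a inj_neq Hij; case: (_ != _).
      case: (s i =P b) => [Hsib|Hsib].
        have Eij : i = j by apply: (perm_inj (s:=s)); rewrite Hsib Hsjb.
        by rewrite Hsib /g tpermR Eij -/a eqxx.
      by rewrite /g tpermD // eq_sym; apply/eqP.
    by rewrite permM Hsjb /g tpermR eqxx /= -/a Hj.
  have Heq : hdist (s * g)%g q' = r by rewrite hdist_mulr.
  rewrite [hdist q' _]hdistC Heq ltnn; split => //; apply/andP; split; lia.
have Finj : {in S &, injective F}.
  move=> s1 s2 H1 H2 EF.
  have [_ E1] := key s1 H1; have [_ E2] := key s2 H2.
  rewrite EF E2 in E1.
  move: EF; rewrite /F -E1; case: ifP => _ //; exact: mulIg.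
rewrite -(card_in_imset Finj); apply: subset_leq_card; apply/subsetP => x /imsetP [s Hs ->].
by have [] := key s Hs.
Qed.

End CaseA.


Section CaseB.
Variable n : nat.
Implicit Types p q s g : {perm 'I_n}.

Definition cyc3 (x y z : 'I_n) : {perm 'I_n} := (tperm x y * tperm x z)%g.

Lemma cyc3E (x y z v : 'I_n) : x != y -> x != z -> y != z ->
  cyc3 x y z v = if v == x then y else if v == y then z else if v == z then x else v.
Proof.
move=> xy xz yz; rewrite /cyc3 permM.
case: (v =P x) => [->|vx]; first by rewrite tpermL tpermD // eq_sym.
case: (v =P y) => [->|vy]; first by rewrite tpermR tpermL.
case: (v =P z) => [->|vz]; first by rewrite (tpermD xz) ?tpermR // eq_sym.
by rewrite !tpermD //; apply/eqP => E; subst.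
Qed.

Lemma hdist4 (x y x' y' : {perm 'I_n}) (a b c d : 'I_n) : uniq [:: a; b; c; d] ->
  (forall i, i \notin [:: a; b; c; d] -> x' i = x i /\ y' i = y i) ->
  hdist x' y' + ((x a != y a) + (x b != y b) + (x c != y c) + (x d != y d)) =
  hdist x y + ((x' a != y' a) + (x' b != y' b) + (x' c != y' c) + (x' d != y' d)).
Proof.
move=> U H; rewrite !hdistE !(bigID (mem [:: a; b; c; d]) xpredT) /=.
rewrite -!big_uniq //= !big_cons big_nil.
have -> : \sum_(i < n | ~~ (i \in [:: a; b; c; d])) (x' i != y' i) =
          \sum_(i < n | ~~ (i \in [:: a; b; c; d])) (x i != y i).
  by apply: eq_bigr => i /H [-> ->].
rewrite big_nil; idtac. move: (\sum_(i < n | _) _) (x a != y a) (x b != y b) (x c != y c) (x d != y d) (x' a != y' a) (x' b != y' b) (x' c != y' c) (x' d != y' d) => S [] [] [] [] [] [] [] []; lia.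
Qed.

Lemma out_mul s (x y z e1 e2 e3 i : 'I_n) : x != y -> x != z -> y != z ->
  s e1 = x -> s e2 = y -> s e3 = z -> i != e1 -> i != e2 -> i != e3 ->
  (s * cyc3 x y z)%g i = s i.
Proof.
move=> xy xz yz E1 E2 E3 i1 i2 i3.
by rewrite permM cyc3E // -E1 -E2 -E3 !(inj_eq perm_inj) (negbTE i1) (negbTE i2) (negbTE i3).
Qed.

Ltac fsimp := repeat (match goal with H : (?x == ?y) = false |- context [?x == ?y] => rewrite H end); rewrite ?eqxx /=.

Lemma caseB p q r (a b c d : 'I_n) : uniq [:: a; b; c; d] ->
  q a = p b -> q b = p a -> q c = p d -> q d = p c -> hdist p q = 2 * r ->
  hdist p (q * cyc3 (p a) (p c) (p d))%g = (2 * r).-1 /\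
  #|hball r p :&: hball r q| <= #|hball r p :&: hball r (q * cyc3 (p a) (p c) (p d))%g|.
Proof.
move=> U qa qb qc qd Hpq.
have : [&& (a != b) && (a != c) && (a != d), (b != c) && (b != d) & c != d].
  by move: U; rewrite /= !inE !negb_or => /and4P [/and3P [-> -> ->] /andP [-> ->] -> _].
move=> /and3P [/andP [/andP [ab ac] ad] /andP [bc bd] cd].
have Fab := negbTE ab; have Fac := negbTE ac; have Fad := negbTE ad.
have Fbc := negbTE bc; have Fbd := negbTE bd; have Fcd := negbTE cd.
have Fba : (b == a) = false by rewrite eq_sym.
have Fca : (c == a) = false by rewrite eq_sym.
have Fda : (d == a) = false by rewrite eq_sym.
have Fcb : (c == b) = false by rewrite eq_sym.
have Fdb : (d == b) = false by rewrite eq_sym.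
have Fdc : (d == c) = false by rewrite eq_sym.
have pac : p a != p c by rewrite inj_neq.
have pad : p a != p d by rewrite inj_neq.
have pcd : p c != p d by rewrite inj_neq.
have pbc : p b != p c by rewrite inj_neq.
have pbd : p b != p d by rewrite inj_neq.
set h := cyc3 (p a) (p c) (p d).
set h2 := cyc3 (p b) (p c) (p d).
set q' := (q * h)%g.
have qout : forall i, i \notin [:: a; b; c; d] -> q' i = q i.
  move=> i; rewrite !inE !negb_or => /and4P [ia ib ic id].
  exact: (out_mul (e1 := b) (e2 := d) (e3 := c)).
have hv : forall x, x \in [:: a; b; c; d] -> h (p x) = p (if x == a then c else if x == c then d else if x == d then a else x).
  move=> x; rewrite !inE => /or4P [] /eqP ->; rewrite /h cyc3E // !(inj_eq perm_inj) ?eqxx ?Fab ?Fac ?Fad ?Fbc ?Fbd ?Fcd ?Fba ?Fca ?Fda ?Fcb ?Fdb ?Fdc //.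
have h2v : forall x, x \in [:: a; b; c; d] -> h2 (p x) = p (if x == b then c else if x == c then d else if x == d then b else x).
  move=> x; rewrite !inE => /or4P [] /eqP ->; rewrite /h2 cyc3E // !(inj_eq perm_inj) ?eqxx ?Fab ?Fac ?Fad ?Fbc ?Fbd ?Fcd ?Fba ?Fca ?Fda ?Fcb ?Fdb ?Fdc //.
have q'a : q' a = p b by rewrite /q' permM qa hv; rewrite ?eqxx ?Fab ?Fac ?Fad ?Fbc ?Fbd ?Fcd ?Fba ?Fca ?Fda ?Fcb ?Fdb ?Fdc /= ?inE ?eqxx ?Fab ?Fac ?Fad ?Fbc ?Fbd ?Fcd ?Fba ?Fca ?Fda ?Fcb ?Fdb ?Fdc /=.
have q'b : q' b = p c by rewrite /q' permM qb hv; rewrite ?eqxx ?Fab ?Fac ?Fad ?Fbc ?Fbd ?Fcd ?Fba ?Fca ?Fda ?Fcb ?Fdb ?Fdc /= ?inE ?eqxx ?Fab ?Fac ?Fad ?Fbc ?Fbd ?Fcd ?Fba ?Fca ?Fda ?Fcb ?Fdb ?Fdc /=.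
have q'c : q' c = p a by rewrite /q' permM qc hv; rewrite ?eqxx ?Fab ?Fac ?Fad ?Fbc ?Fbd ?Fcd ?Fba ?Fca ?Fda ?Fcb ?Fdb ?Fdc /= ?inE ?eqxx ?Fab ?Fac ?Fad ?Fbc ?Fbd ?Fcd ?Fba ?Fca ?Fda ?Fcb ?Fdb ?Fdc /=.
have q'd : q' d = p d by rewrite /q' permM qd hv; rewrite ?eqxx ?Fab ?Fac ?Fad ?Fbc ?Fbd ?Fcd ?Fba ?Fca ?Fda ?Fcb ?Fdb ?Fdc /= ?inE ?eqxx ?Fab ?Fac ?Fad ?Fbc ?Fbd ?Fcd ?Fba ?Fca ?Fda ?Fcb ?Fdb ?Fdc /=.
split.
  have := hdist4 (x:=p) (y:=q) (x':=p) (y':=q') U (fun i Hi => conj erefl (qout i Hi)).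
  rewrite qa qb qc qd q'a q'b q'c q'd !inj_neq ?eqxx ?Fab ?Fac ?Fad ?Fbc ?Fbd ?Fcd ?Fba ?Fca ?Fda ?Fcb ?Fdb ?Fdc /= => H; clear -H Hpq; lia.

pose F (s : {perm 'I_n}) := if s a == p a then (if s c == p c then s else (s * h2)%g)
                            else (if s c == p c then s else (s * h)%g).
set S := hball r p :&: hball r q.
set S' := hball r p :&: hball r q'.
have key : forall s, s \in S -> [/\ F s \in S', F s a = (if s a == p a then p a else p b)
    & F s b = (if s c == p c then (if s a == p a then p b else p a) else p c)].
  move=> s; rewrite !inE => /andP [Hps Hqs]; rewrite hdistC in Hqs.
  have [Hor Hps' Hsq'] := far_mem Hpq Hps Hqs.
  have sab : if s a == p a then s a = p a /\ s b = p b else s a = p b /\ s b = p a.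
    case: ifP => Ea.
      split; first exact/eqP.
      by move: (Hor b); rewrite qb -(eqP Ea) (inj_eq perm_inj) Fba orbF => /eqP.
    have sa : s a = p b by move: (Hor a); rewrite Ea qa /= => /eqP.
    by split => //; move: (Hor b); rewrite qb -sa (inj_eq perm_inj) Fba /= => /eqP.
  have scd : if s c == p c then s c = p c /\ s d = p d else s c = p d /\ s d = p c.
    case: ifP => Ec.
      split; first exact/eqP.
      by move: (Hor d); rewrite qd -(eqP Ec) (inj_eq perm_inj) Fdc orbF => /eqP.
    have sc : s c = p d by move: (Hor c); rewrite Ec qc /= => /eqP.
    by split => //; move: (Hor d); rewrite qd -sc (inj_eq perm_inj) Fdc /= => /eqP.
  rewrite /F; move: sab scd.
  case Ea: (s a == p a); case Ec: (s c == p c) => [] [sa sb] [sc sd].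
  -
    have := hdist4 (x:=s) (y:=q) (x':=s) (y':=q') U (fun i Hi => conj erefl (qout i Hi)).
    rewrite sa sb sc sd qa qb qc qd q'a q'b q'c q'd !inj_neq ?eqxx ?Fab ?Fac ?Fad ?Fbc ?Fbd ?Fcd ?Fba ?Fca ?Fda ?Fcb ?Fdb ?Fdc /= => H.
    rewrite [hdist q' s]hdistC ?sa ?sb; split => //; apply/andP; split; clear -H Hps Hps' Hsq'; lia.
  -
    have sout : forall i, i \notin [:: a; b; c; d] -> (s * h2)%g i = s i.
      move=> i; rewrite !inE !negb_or => /and4P [ia ib ic id].
      exact: (out_mul (e1 := b) (e2 := d) (e3 := c)).
    have s'a : (s * h2)%g a = p a by rewrite permM sa h2v ?eqxx ?Fab ?Fac ?Fad ?Fbc ?Fbd ?Fcd ?Fba ?Fca ?Fda ?Fcb ?Fdb ?Fdc /= ?inE ?eqxx ?Fab ?Fac ?Fad ?Fbc ?Fbd ?Fcd ?Fba ?Fca ?Fda ?Fcb ?Fdb ?Fdc /=.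
    have s'b : (s * h2)%g b = p c by rewrite permM sb h2v ?eqxx ?Fab ?Fac ?Fad ?Fbc ?Fbd ?Fcd ?Fba ?Fca ?Fda ?Fcb ?Fdb ?Fdc /= ?inE ?eqxx ?Fab ?Fac ?Fad ?Fbc ?Fbd ?Fcd ?Fba ?Fca ?Fda ?Fcb ?Fdb ?Fdc /=.
    have s'c : (s * h2)%g c = p b by rewrite permM sc h2v ?eqxx ?Fab ?Fac ?Fad ?Fbc ?Fbd ?Fcd ?Fba ?Fca ?Fda ?Fcb ?Fdb ?Fdc /= ?inE ?eqxx ?Fab ?Fac ?Fad ?Fbc ?Fbd ?Fcd ?Fba ?Fca ?Fda ?Fcb ?Fdb ?Fdc /=.
    have s'd : (s * h2)%g d = p d by rewrite permM sd h2v ?eqxx ?Fab ?Fac ?Fad ?Fbc ?Fbd ?Fcd ?Fba ?Fca ?Fda ?Fcb ?Fdb ?Fdc /= ?inE ?eqxx ?Fab ?Fac ?Fad ?Fbc ?Fbd ?Fcd ?Fba ?Fca ?Fda ?Fcb ?Fdb ?Fdc /=.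
    have := hdist4 (x:=p) (y:=s) (x':=p) (y':=(s * h2)%g) U (fun i Hi => conj erefl (sout i Hi)).
    rewrite sa sb sc sd s'a s'b s'c s'd !inj_neq ?eqxx ?Fab ?Fac ?Fad ?Fbc ?Fbd ?Fcd ?Fba ?Fca ?Fda ?Fcb ?Fdb ?Fdc /= => H1.
    have := hdist4 (x:=s) (y:=q) (x':=(s * h2)%g) (y':=q') U (fun i Hi => conj (sout i Hi) (qout i Hi)).
    rewrite sa sb sc sd qa qb qc qd q'a q'b q'c q'd s'a s'b s'c s'd !inj_neq ?eqxx ?Fab ?Fac ?Fad ?Fbc ?Fbd ?Fcd ?Fba ?Fca ?Fda ?Fcb ?Fdb ?Fdc /= => H2.
    rewrite [hdist q' _]hdistC ?s'a ?s'b; split => //; apply/andP; split; clear -H1 H2 Hps' Hsq'; lia.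
  -
    have := hdist4 (x:=s) (y:=q) (x':=s) (y':=q') U (fun i Hi => conj erefl (qout i Hi)).
    rewrite sa sb sc sd qa qb qc qd q'a q'b q'c q'd !inj_neq ?eqxx ?Fab ?Fac ?Fad ?Fbc ?Fbd ?Fcd ?Fba ?Fca ?Fda ?Fcb ?Fdb ?Fdc /= => H.
    rewrite [hdist q' s]hdistC ?sa ?sb; split => //; apply/andP; split; clear -H Hps Hps' Hsq'; lia.
  -
    have sout : forall i, i \notin [:: a; b; c; d] -> (s * h)%g i = s i.
      move=> i; rewrite !inE !negb_or => /and4P [ia ib ic id].
      exact: (out_mul (e1 := b) (e2 := d) (e3 := c)).
    have s'a : (s * h)%g a = p b by rewrite permM sa hv ?eqxx ?Fab ?Fac ?Fad ?Fbc ?Fbd ?Fcd ?Fba ?Fca ?Fda ?Fcb ?Fdb ?Fdc /= ?inE ?eqxx ?Fab ?Fac ?Fad ?Fbc ?Fbd ?Fcd ?Fba ?Fca ?Fda ?Fcb ?Fdb ?Fdc /=.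
    have s'b : (s * h)%g b = p c by rewrite permM sb hv ?eqxx ?Fab ?Fac ?Fad ?Fbc ?Fbd ?Fcd ?Fba ?Fca ?Fda ?Fcb ?Fdb ?Fdc /= ?inE ?eqxx ?Fab ?Fac ?Fad ?Fbc ?Fbd ?Fcd ?Fba ?Fca ?Fda ?Fcb ?Fdb ?Fdc /=.
    have s'c : (s * h)%g c = p a by rewrite permM sc hv ?eqxx ?Fab ?Fac ?Fad ?Fbc ?Fbd ?Fcd ?Fba ?Fca ?Fda ?Fcb ?Fdb ?Fdc /= ?inE ?eqxx ?Fab ?Fac ?Fad ?Fbc ?Fbd ?Fcd ?Fba ?Fca ?Fda ?Fcb ?Fdb ?Fdc /=.
    have s'd : (s * h)%g d = p d by rewrite permM sd hv ?eqxx ?Fab ?Fac ?Fad ?Fbc ?Fbd ?Fcd ?Fba ?Fca ?Fda ?Fcb ?Fdb ?Fdc /= ?inE ?eqxx ?Fab ?Fac ?Fad ?Fbc ?Fbd ?Fcd ?Fba ?Fca ?Fda ?Fcb ?Fdb ?Fdc /=.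
    have := hdist4 (x:=p) (y:=s) (x':=p) (y':=(s * h)%g) U (fun i Hi => conj erefl (sout i Hi)).
    rewrite sa sb sc sd s'a s'b s'c s'd !inj_neq ?eqxx ?Fab ?Fac ?Fad ?Fbc ?Fbd ?Fcd ?Fba ?Fca ?Fda ?Fcb ?Fdb ?Fdc /= => H1.
    have H2 : hdist q' (s * h)%g = r by rewrite hdist_mulr hdistC.
    rewrite H2 ?s'a ?s'b; split => //; apply/andP; split; clear -H1 H2 Hps' Hsq'; lia.
have Finj : {in S &, injective F}.
  move=> s1 s2 H1 H2 EF.
  have [_ A1 B1] := key s1 H1; have [_ A2 B2] := key s2 H2.
  have pab : p a != p b by rewrite inj_neq.
  have Ea : (s1 a == p a) = (s2 a == p a).
    move: A1 A2; rewrite EF => ->.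
    case: (s1 a == p a); case: (s2 a == p a) => // E; move: pab; rewrite ?E eqxx //.
  have Ec : (s1 c == p c) = (s2 c == p c).
    move: B1 B2; rewrite EF Ea => ->.
    case: (s2 a == p a); case: (s1 c == p c); case: (s2 c == p c) => // E;
      [move: pbc | move: pbc | move: pac | move: pac]; rewrite ?E eqxx //.
  move: EF; rewrite /F Ea Ec.
  case: (s2 a == p a); case: (s2 c == p c) => //; exact: mulIg.
rewrite -(card_in_imset Finj); apply: subset_leq_card; apply/subsetP => x /imsetP [s Hs ->].
by have [] := key s Hs.
Qed.
End CaseB.


Lemma d2r_le n (p q : {perm 'I_n}) r : 2 <= r -> hdist p q = 2 * r ->
  #|hball r p :&: hball r q| <= Ival n (2 * r - 1) r.
Proof.
move=> Hr Hpq.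
have toI : forall q', hdist p q' = (2 * r).-1 ->
    #|hball r p :&: hball r q'| <= Ival n (2 * r - 1) r.
  move=> q' Hq'; rewrite /Ival; apply: (@leq_bigmax_cond _ _ _ (p, q')) => /=.
  by rewrite Hq' subn1.
case: (boolP [exists j, (p j != q j) && (p ((q^-1)%g (p j)) != q j)]).
  move=> /existsP [j /andP [Hj Hk]].
  have [H1 H2] := caseA Hpq Hj Hk.
  exact: leq_trans H2 (toI _ H1).
rewrite negb_exists => /forallP Hall.
have Hpair : forall j, p j != q j -> p ((q^-1)%g (p j)) = q j.
  by move=> j Hj; move: (Hall j); rewrite Hj /= negbK => /eqP.
set D := [set i | p i != q i].
have cD : #|D| = 2 * r by [].
have : 0 < #|D| by lia.
move=> /card_gt0P [a]; rewrite inE => Ha.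
set b := (q^-1)%g (p a).
have qb : q b = p a by rewrite /b permKV.
have pb : p b = q a by exact: Hpair.
have : 0 < #|D :\: [set a; b]|.
  rewrite cardsD; have := subset_leq_card (subsetIr D [set a; b]).
  rewrite cards2 cD. move=> HH. lia.
move=> /card_gt0P [c]; rewrite !inE negb_or => /andP [/andP [ca cb] Hc].
set d := (q^-1)%g (p c).
have qd : q d = p c by rewrite /d permKV.
have pd : p d = q c by exact: Hpair.
have ab : a != b by apply/eqP => E; move: Ha; rewrite -qb -E eqxx.
have dc : d != c by apply/eqP => E; move: Hc; rewrite -qd E eqxx.
have da : d != a.
  by apply/eqP => E; move: cb; rewrite /b -E pd permK eqxx.
have db : d != b.
  apply/eqP => E; move: ca; have : q d = q b by rewrite E.
  by rewrite qd qb => /perm_inj ->; rewrite eqxx.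
have U : uniq [:: a; b; c; d].
  rewrite /= !inE !negb_or ab eq_sym ca eq_sym da /= eq_sym cb eq_sym db /=.
  by rewrite eq_sym dc.
have [H1 H2] := caseB U (esym pb) qb (esym pd) qd Hpq.
exact: leq_trans H2 (toI _ H1).
Qed.

Lemma N_eq_I n r : 2 <= r ->
  Nval n (2 * r - 1) r = Ival n (2 * r - 1) r /\ Nval n (2 * r) r <= Ival n (2 * r - 1) r.
Proof.
move=> Hr.
have Hle : forall k, 2 * r - 1 <= k -> Nval n k r <= Ival n (2 * r - 1) r.
  move=> k Hk; apply/bigmax_leqP => [[p q]] /= Hpq.
  case: (ltngtP (hdist p q) (2 * r)) => H.
  - rewrite /Ival; apply: (@leq_bigmax_cond _ _ _ (p, q)) => /=.
    by apply/eqP; clear -H Hpq Hk; lia.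
  - by rewrite far_empty.
  - exact: d2r_le.
split; last by apply: Hle; lia.
apply/eqP; rewrite eqn_leq Hle //=.
apply/bigmax_leqP => [[p q]] /= /eqP Hpq.
by apply: (@leq_bigmax_cond _ _ _ (p, q)) => /=; rewrite Hpq.
Qed.


Section Mk.
Variable n : nat.

Definition fo (f : nat -> nat) (i : 'I_n) : 'I_n := insubd i (f i).
Definition mkfun (f : nat -> nat) : 'I_n -> 'I_n :=
  if injectiveb (fo f) then fo f else id.
Lemma mkfun_inj f : injective (mkfun f).
Proof. by rewrite /mkfun; case: (injectiveP (fo f)) => // _ x y. Qed.
Definition mkp (f : nat -> nat) : {perm 'I_n} := perm (@mkfun_inj f).

Lemma mkpE f : (forall i, i < n -> f i < n) ->
  (forall i j, i < n -> j < n -> f i = f j -> i = j) ->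
  forall i : 'I_n, val (mkp f i) = f i.
Proof.
move=> Hb Hi.
have Hv : forall i : 'I_n, val (fo f i) = f i by move=> i; rewrite /fo insubdK //; exact: Hb.
have Hinj : injective (fo f).
  move=> i j E; apply: val_inj; apply: Hi; [exact: ltn_ord|exact: ltn_ord|by rewrite -!Hv E].
by move=> i; rewrite permE /mkfun; case: (injectiveP (fo f)) => // _; rewrite Hv.
Qed.

Lemma hdist_nat (p q : {perm 'I_n}) (f g : nat -> nat) :
  (forall i : 'I_n, val (p i) = f i) -> (forall i : 'I_n, val (q i) = g i) ->
  hdist p q = \sum_(0 <= i < n) (f i != g i).
Proof.
move=> Hp Hq; rewrite hdistE big_mkord; apply: eq_bigr => i _.
by rewrite -val_eqE /= Hp Hq.
Qed.
End Mk.

Lemma sum_count (s : seq nat) (F : pred nat) : \sum_(i <- s) (F i : nat) = count F s.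
Proof. by elim: s => [|x s IH]; rewrite ?big_nil // big_cons IH. Qed.

Definition pairsw (a : nat -> bool) (i : nat) : nat :=
  if a i./2 then (if odd i then i.-1 else i.+1) else i.

Definition fmk (m l : nat) (a : nat -> bool) (P : seq nat) (i : nat) : nat :=
  if i < 2 * m then pairsw a i else if i < 2 * m + l then 2 * m + nth 0 P (i - 2 * m) else i.

Definition validP (l : nat) (P : seq nat) := [&& uniq P, all (fun x => x < l) P & size P == l].

Lemma pairsw_half a i : (pairsw a i)./2 = i./2.
Proof.
rewrite /pairsw; case: (a _) => //.
have E := odd_double_half i.
case Ho: (odd i); rewrite Ho in E.
  by rewrite -{1}E add1n /= doubleK.
by rewrite -{1}E add0n -[(_.*2).+1]/(true + _.*2) half_bit_double.
Qed.

Lemma pairsw_odd a i : odd (pairsw a i) = a i./2 (+) odd i.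
Proof.
rewrite /pairsw; case: (a _) => //=; case Ho: (odd i) => /=.
  by case: i Ho => //= i; case: (odd i).
by rewrite /= Ho.
Qed.

Lemma pairsw_inj a i j : pairsw a i = pairsw a j -> i = j.
Proof.
move=> E.
have Eh : i./2 = j./2 by rewrite -(pairsw_half a i) -(pairsw_half a j) E.
have Eo : odd i = odd j.
  have := pairsw_odd a i; rewrite E pairsw_odd Eh.
  by case: (a _); case: (odd i); case: (odd j).
by rewrite -(odd_double_half i) -(odd_double_half j) Eo Eh.
Qed.

Lemma pairsw_lt a m i : i < 2 * m -> pairsw a i < 2 * m.
Proof. by rewrite mul2n -!ltn_half_double pairsw_half. Qed.

Section Fmk.
Variables (n m l : nat) (P : seq nat).
Hypothesis HP : validP l P.
Hypothesis Hn : 2 * m + l <= n.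

Lemma nthP_lt x : x < l -> nth 0 P x < l.
Proof.
move: HP => /and3P [_ /all_nthP Ha /eqP Hs] Hx.
by apply: Ha; rewrite Hs.
Qed.

Lemma fmk_spec a i :
  [/\ i < 2 * m -> fmk m l a P i < 2 * m,
      2 * m <= i < 2 * m + l -> 2 * m <= fmk m l a P i < 2 * m + l &
      2 * m + l <= i -> fmk m l a P i = i].
Proof.
rewrite /fmk; split.
- by move=> H; rewrite H; exact: pairsw_lt.
- move=> /andP [H1 H2]; rewrite ltnNge H1 /= H2 leq_addr /= ltn_add2l.
  by apply: nthP_lt; lia.
- move=> H; have -> : (i < 2 * m) = false by lia.
  by have -> : (i < 2 * m + l) = false by lia.
Qed.

Lemma fmk_lt a i : i < n -> fmk m l a P i < n.
Proof.
have [H1 H2 H3] := fmk_spec a i; move=> Hi.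
case: (ltnP i (2 * m)) => Ha; first by have := H1 Ha; lia.
case: (ltnP i (2 * m + l)) => Hb; first by have := H2 (introT andP (conj Ha Hb)) ; lia.
by rewrite H3.
Qed.

Lemma fmk_inj a i j : i < n -> j < n -> fmk m l a P i = fmk m l a P j -> i = j.
Proof.
move=> Hi Hj E.
have [I1 I2 I3] := fmk_spec a i; have [J1 J2 J3] := fmk_spec a j.
case: (ltnP i (2 * m)) => Ia; case: (ltnP j (2 * m)) => Ja.
- move: E; rewrite /fmk Ia Ja; exact: pairsw_inj.
- case: (ltnP j (2 * m + l)) => Jb.
    by have := I1 Ia; have := J2 (introT andP (conj Ja Jb)); lia.
  by have := I1 Ia; have := J3 Jb; lia.
- case: (ltnP i (2 * m + l)) => Ib.
    by have := J1 Ja; have := I2 (introT andP (conj Ia Ib)); lia.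
  by have := J1 Ja; have := I3 Ib; lia.
case: (ltnP i (2 * m + l)) => Ib; case: (ltnP j (2 * m + l)) => Jb.
- have Fi : (i < 2 * m) = false by lia.
  have Fj : (j < 2 * m) = false by lia.
  move: E; rewrite /fmk Fi Fj Ib Jb => /eqP; rewrite eqn_add2l.
  move: HP => /and3P [Hu _ /eqP Hs].
  rewrite nth_uniq ?Hs //; try lia; by move/eqP; lia.
- by have := I2 (introT andP (conj Ia Ib)); have := J3 Jb; lia.
- by have := J2 (introT andP (conj Ja Jb)); have := I3 Ib; lia.
- by move: E; rewrite I3 // J3.
Qed.
End Fmk.

Lemma pairsw_even a k : pairsw a (2 * k) = if a k then (2 * k).+1 else 2 * k.
Proof. by rewrite /pairsw mul2n doubleK odd_double. Qed.
Lemma pairsw_odd2 a k : pairsw a (2 * k).+1 = if a k then 2 * k else (2 * k).+1.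
Proof.
have H : ((2 * k).+1)./2 = k by rewrite mul2n -[(_.*2).+1]/(true + _.*2) half_bit_double.
by rewrite /pairsw H /= mul2n odd_double.
Qed.

Lemma sum_pairsw a b m :
  \sum_(0 <= i < 2 * m) (pairsw a i != pairsw b i) = 2 * \sum_(0 <= k < m) (a k != b k).
Proof.
elim: m => [|m IH]; first by rewrite !big_geq.
rewrite [2 * m.+1]mulnS !add2n !big_nat_recr //= IH !pairsw_even !pairsw_odd2.
case: (a m); case: (b m) => /=; rewrite ?eqxx /=.
- lia.
- have -> : ((2 * m).+1 == 2 * m) = false by lia.
  have -> : (2 * m == (2 * m).+1) = false by lia.
  lia.
- have -> : ((2 * m).+1 == 2 * m) = false by lia.
  have -> : (2 * m == (2 * m).+1) = false by lia.
  lia.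
- lia.
Qed.

Lemma sum_fmk n m l a b P Q : 2 * m + l <= n ->
  \sum_(0 <= i < n) (fmk m l a P i != fmk m l b Q i) =
  2 * \sum_(0 <= k < m) (a k != b k) + count (fun x => nth 0 P x != nth 0 Q x) (iota 0 l).
Proof.
move=> Hn.
rewrite (@big_cat_nat _ _ _ (2 * m)) //=; last by lia.
rewrite [\sum_(2 * m <= i < n) _](@big_cat_nat _ _ _ (2 * m + l)) //=; last by lia.
have -> : \sum_(2 * m + l <= i < n) (fmk m l a P i != fmk m l b Q i) = 0.
  rewrite big_nat_cond big1 // => i /andP [/andP [Hi _] _].
  rewrite /fmk; have -> : (i < 2 * m) = false by lia.
  have -> : (i < 2 * m + l) = false by lia.
  by rewrite eqxx.
have -> : \sum_(0 <= i < 2 * m) (fmk m l a P i != fmk m l b Q i) =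
          \sum_(0 <= i < 2 * m) (pairsw a i != pairsw b i).
  rewrite big_nat_cond [RHS]big_nat_cond; apply: eq_bigr => i /andP [/andP [_ Hi] _].
  by rewrite /fmk Hi.
rewrite sum_pairsw addn0; congr (_ + _).
rewrite -{1}[2 * m]add0n big_addn addKn /index_iota subn0 -sum_count.
apply: eq_big_seq => i; rewrite mem_iota => /andP [_ Hi]; rewrite add0n in Hi.
rewrite /fmk; have -> : (i + 2 * m < 2 * m) = false by lia.
by rewrite [i + 2 * m]addnC ltn_add2l Hi addKn eqn_add2l.
Qed.

Definition ecount (l : nat) (P Q : seq nat) := count (fun x => nth 0 P x != nth 0 Q x) (iota 0 l).

Lemma hdistX n m l a b P Q : validP l P -> validP l Q -> 2 * m + l <= n ->
  hdist (mkp n (fmk m l a P)) (mkp n (fmk m l b Q)) =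
  2 * \sum_(0 <= k < m) (a k != b k) + ecount l P Q.
Proof.
move=> HP HQ Hn.
rewrite (@hdist_nat _ _ _ (fmk m l a P) (fmk m l b Q)) ?sum_fmk //.
  apply: mkpE => i j; [exact: fmk_lt | exact: fmk_inj].
apply: mkpE => i j; [exact: fmk_lt | exact: fmk_inj].
Qed.

Definition afun m (A : {set 'I_m}) (k : nat) := [exists j : 'I_m, (j \in A) && (val j == k)].

Lemma afun_val m A (k : 'I_m) : afun A k = (k \in A).
Proof.
apply/existsP/idP => [[j /andP [Hj /eqP E]]|Hk]; last by exists k; rewrite Hk eqxx.
by have <- : j = k by apply: val_inj.
Qed.

Lemma sum_afun m (A : {set 'I_m}) : \sum_(0 <= k < m) (afun A k : nat) = #|A|.
Proof.
rewrite big_mkord -sum1_card [RHS]big_mkcond /=; apply: eq_bigr => k _.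
by rewrite afun_val; case: (k \in A).
Qed.

Lemma sum_nafun m (A : {set 'I_m}) : \sum_(0 <= k < m) (~~ afun A k : nat) = m - #|A|.
Proof.
have H : \sum_(0 <= k < m) ((afun A k : nat) + (~~ afun A k : nat)) = m.
  transitivity (\sum_(0 <= k < m) 1).
    by apply: eq_bigr => k _; case: (afun A k).
  by rewrite sum_nat_const_nat subn0 muln1.
move: H; rewrite big_split /= sum_afun => H; rewrite -[X in X - _]H addKn.
by [].
Qed.

Definition pats_ok (l dl : nat) (C0 : seq nat) (pats : seq (seq nat * nat)) :=
  [&& validP l (iota 0 l), validP l C0, ecount l (iota 0 l) C0 == l, uniq (map fst pats) &
   all (fun x => [&& validP l x.1, ecount l (iota 0 l) x.1 <= 2 * x.2 + dl &
                     ecount l C0 x.1 + 2 * x.2 <= 6 + dl]) pats].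

Lemma count_D m t (pats : seq (seq nat * nat)) :
  #|[set x : {set 'I_m} * 'I_(size pats) |
      (#|x.1| == t - (nth ([::], 0) pats x.2).2) && ((nth ([::], 0) pats x.2).2 <= t)]| =
  \sum_(x <- pats) (if x.2 <= t then 'C(m, t - x.2) else 0).
Proof.
rewrite (big_nth ([::], 0)) big_mkord.
rewrite -sum1_card big_mkcond /=.
transitivity (\sum_(x : {set 'I_m} * 'I_(size pats))
   (fun (A : {set 'I_m}) (j : 'I_(size pats)) => ((#|A| == t - (nth ([::], 0) pats j).2) &&
        ((nth ([::], 0) pats j).2 <= t) : nat)) x.1 x.2).
  by apply: eq_bigr => x _; rewrite inE; case: (_ && _).
rewrite -(pair_bigA _ (fun (A : {set 'I_m}) (j : 'I_(size pats)) => ((#|A| == t - (nth ([::], 0) pats j).2) &&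
        ((nth ([::], 0) pats j).2 <= t) : nat))) /= exchange_big /=.
apply: eq_bigr => j _.
case: ((nth ([::], 0) pats j).2 <= t).
  rewrite -[in RHS](card_ord m) -card_draws -sum1_card [RHS]big_mkcond /=.
  by apply: eq_bigr => A _; rewrite inE andbT; case: (_ == _).
by rewrite big1 // => A _; rewrite andbF.
Qed.

Lemma sum_false m (A : {set 'I_m}) : \sum_(0 <= k < m) (false != afun A k) = #|A|.
Proof. rewrite -sum_afun; apply: eq_bigr => k _; by case: (afun A k). Qed.
Lemma sum_true m (A : {set 'I_m}) : \sum_(0 <= k < m) (true != afun A k) = m - #|A|.
Proof. rewrite -sum_nafun; apply: eq_bigr => k _; by case: (afun A k). Qed.
Lemma sum_ft m : \sum_(0 <= k < m) (false != true) = m.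
Proof. by rewrite sum_nat_const_nat subn0 muln1. Qed.

Section Lower.
Variables (n m l t dl : nat) (C0 : seq nat) (pats : seq (seq nat * nat)).
Hypotheses (Ht : 2 <= t) (Hm : m = 2 * t - 3) (Hn : 2 * m + l <= n)
  (Hok : pats_ok l dl C0 pats).

Lemma lower_gen :
  \sum_(x <- pats) (if x.2 <= t then 'C(m, t - x.2) else 0) <= Ival n (2 * m + l) (2 * t + dl).
Proof.
move: Hok => /and5P [Hid HC0 /eqP HeC Hu /allP Hall].
rewrite -(count_D m t pats).
set r := 2 * t + dl.
set Z := mkp n (fmk m l (fun _ => false) (iota 0 l)).
set C := mkp n (fmk m l (fun _ => true) C0).
have HZC : hdist Z C = 2 * m + l by rewrite hdistX // HeC sum_ft.
apply: (@leq_trans #|hball r Z :&: hball r C|); last first.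
  by rewrite /Ival; apply: (@leq_bigmax_cond _ _ _ (Z, C)) => /=; rewrite HZC.
set pj := fun j : 'I_(size pats) => nth ([::], 0) pats j.
set D := [set x : {set 'I_m} * 'I_(size pats) | _].
have Hpj : forall j, pj j \in pats by move=> j; rewrite /pj mem_nth.
have Hvalid : forall j, validP l (pj j).1 by move=> j; case/and3P: (Hall _ (Hpj j)).
pose G := fun x : {set 'I_m} * 'I_(size pats) => mkp n (fmk m l (afun x.1) (pj x.2).1).
have Ginj : injective G.
  move=> [A j] [B k] E.
  have Ev : forall i, i < n -> fmk m l (afun A) (pj j).1 i = fmk m l (afun B) (pj k).1 i.
    move=> i Hi; have := congr1 (fun p : {perm 'I_n} => val (p (Ordinal Hi))) E.
    rewrite /G /= !mkpE //; move=> i' j'; [exact: fmk_lt|exact: fmk_inj|exact: fmk_lt|exact: fmk_inj].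
  have EA : A = B.
    apply/setP => x; rewrite -!afun_val.
    have := Ev (2 * x) ltac:(have := ltn_ord x; lia).
    rewrite /fmk; have -> : (2 * x < 2 * m) = true by have := ltn_ord x; lia.
    rewrite !pairsw_even; case: (afun A x); case: (afun B x) => //= H; lia.
  have EP : (pj j).1 = (pj k).1.
    move: (Hvalid j) (Hvalid k) => /and3P [_ _ /eqP Sj] /and3P [_ _ /eqP Sk].
    apply: (@eq_from_nth _ 0) => [|x Hx]; first by rewrite Sj Sk.
    have := Ev (2 * m + x) ltac:(rewrite Sj in Hx; lia).
    rewrite /fmk; have -> : (2 * m + x < 2 * m) = false by lia.
    rewrite ltn_add2l -Sj Hx addKn => /eqP; rewrite eqn_add2l => /eqP.
    by [].
  have Ejk : j = k.
    apply: val_inj => /=; apply/eqP.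
    rewrite -(@nth_uniq _ [::] (map fst pats)) ?size_map //.
    by rewrite !(nth_map ([::], 0)) //; apply/eqP; exact: EP.
  by rewrite EA Ejk.
rewrite -(card_in_imset (f := G) (D := mem D)); last by move=> x y _ _; exact: Ginj.
apply: subset_leq_card; apply/subsetP => s /imsetP [[A j] HD ->].
move: HD; rewrite !inE /= => /andP [/eqP HA Hdt].
have := Hall _ (Hpj j) => /and3P [HP He1 He2].
rewrite /G /= /Z /C [hdist (mkp _ (fmk _ _ (fun _ => true) _)) _]hdistX //
  [hdist (mkp _ (fmk _ _ (fun _ => false) _)) _]hdistX //.
rewrite sum_false sum_true HA.
have HAm : #|A| <= m by rewrite -[X in _ <= X](card_ord m); exact: max_card.
rewrite HA in HAm.
rewrite /pj /= in He1 He2 *.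
apply/andP; split; rewrite /r; clear -He1 He2 HAm Hdt Hm Ht; lia.
Qed.
End Lower.


Definition cyc5 := [:: 1; 2; 3; 4; 0].
Definition pats5 : seq (seq nat * nat) := [:: ([:: 0; 1; 2; 3; 4], 0); ([:: 1; 2; 3; 4; 0], 3); ([:: 1; 0; 2; 3; 4], 1); ([:: 0; 2; 1; 3; 4], 1); ([:: 0; 1; 3; 2; 4], 1); ([:: 0; 1; 2; 4; 3], 1); ([:: 4; 1; 2; 3; 0], 1); ([:: 1; 2; 3; 0; 4], 2); ([:: 0; 2; 3; 4; 1], 2); ([:: 2; 1; 3; 4; 0], 2); ([:: 1; 3; 2; 4; 0], 2); ([:: 1; 2; 4; 3; 0], 2)].
Definition cyc7 := [:: 1; 2; 3; 4; 5; 6; 0].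
Definition pats7 : seq (seq nat * nat) := [:: ([:: 0; 1; 2; 3; 4; 5; 6], 0); ([:: 1; 2; 3; 4; 5; 6; 0], 3); ([:: 1; 2; 0; 3; 4; 5; 6], 1); ([:: 0; 2; 3; 1; 4; 5; 6], 1); ([:: 0; 1; 3; 4; 2; 5; 6], 1); ([:: 0; 1; 2; 4; 5; 3; 6], 1); ([:: 0; 1; 2; 3; 5; 6; 4], 1); ([:: 5; 1; 2; 3; 4; 6; 0], 1); ([:: 1; 6; 2; 3; 4; 5; 0], 1); ([:: 1; 2; 3; 4; 0; 5; 6], 2); ([:: 0; 2; 3; 4; 5; 1; 6], 2); ([:: 0; 1; 3; 4; 5; 6; 2], 2); ([:: 3; 1; 2; 4; 5; 6; 0], 2); ([:: 1; 4; 2; 3; 5; 6; 0], 2); ([:: 1; 2; 5; 3; 4; 6; 0], 2); ([:: 1; 2; 3; 6; 4; 5; 0], 2)].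

Lemma ok5 : pats_ok 5 0 cyc5 pats5. Proof. by vm_compute. Qed.
Lemma ok7 : pats_ok 7 1 cyc7 pats7. Proof. by vm_compute. Qed.

Lemma arith_gen t (l : nat) (s : seq (seq nat * nat)) : 2 <= t ->
  \sum_(x <- s) (if x.2 <= t then 'C(2 * t - 3, t - x.2) else 0) =
    (if 0 <= t then 'C(2 * t - 3, t - 0) else 0) + (if 3 <= t then 'C(2 * t - 3, t - 3) else 0)
    + l * ((if 1 <= t then 'C(2 * t - 3, t - 1) else 0) + (if 2 <= t then 'C(2 * t - 3, t - 2) else 0)) ->
  2 * 'C(2 * t - 3, t) + l * 'C(2 * t - 2, t - 1) <=
  \sum_(x <- s) (if x.2 <= t then 'C(2 * t - 3, t - x.2) else 0).
Proof.
move=> Ht ->.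
case: t Ht => [|[|s']] // _.
case: s' => [|s2].
  rewrite (_ : 'C(2 * 2 - 3, 2) = 0) // (_ : 'C(2 * 2 - 3, 2 - 1) = 1) //.
set m := 2 * s2.+3 - 3.
have Hm : m = (2 * s2).+3 by rewrite /m; lia.
have -> : 2 * s2.+3 - 2 = m.+1 by lia.
have -> : s2.+3 - 1 = s2.+2 by lia.
have -> : s2.+3 - 2 = s2.+1 by lia.
have -> : s2.+3 - 3 = s2 by lia.
have -> : (3 <= s2.+3) = true by [].
have -> : (0 <= s2.+3) = true by [].
have -> : (1 <= s2.+3) = true by [].
have -> : (2 <= s2.+3) = true by [].
rewrite subn0 (binS m s2.+1).
have E : 'C(m, s2) = 'C(m, s2.+3).
  rewrite -(@bin_sub m s2.+3); last by lia.
  by have -> : m - s2.+3 = s2 by lia.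
rewrite E; lia.
Qed.

Theorem theorem2 (t r : nat) :
  2 <= t -> (r = 2 * t \/ r = 2 * t + 1) ->
  let ell := if r == 2 * t then 5 else 7 in
  (forall n, 2 * r - 1 <= n ->
     2 * 'C(2 * t - 3, t) + ell * 'C(2 * t - 2, t - 1) <= Ival n (2 * r - 1) r) /\
  (forall n, 2 * r <= n ->
     [/\ Nval n (2 * r - 1) r = Ival n (2 * r - 1) r,
         Nval n (2 * r) r <= Ival n (2 * r - 1) r &
         2 * 'C(2 * t - 3, t) + ell * 'C(2 * t - 2, t - 1) <= Nval n (2 * r - 1) r]).
Proof.
move=> Ht Hr ell.
have key : forall n, 2 * r - 1 <= n ->
    2 * 'C(2 * t - 3, t) + ell * 'C(2 * t - 2, t - 1) <= Ival n (2 * r - 1) r.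
  move=> n Hn; case: Hr => Hr.
  - have -> : ell = 5 by rewrite /ell Hr eqxx.
    have H := @lower_gen n (2 * t - 3) 5 t 0 cyc5 pats5 Ht erefl
      ltac:(clear -Hn Hr Ht; lia) ok5.
    have -> : 2 * r - 1 = 2 * (2 * t - 3) + 5 by clear -Hr Ht; lia.
    have -> : r = 2 * t + 0 by clear -Hr; lia.
    apply: leq_trans H; apply: arith_gen => //.
    rewrite !big_cons big_nil /=; lia.
  - have -> : ell = 7 by rewrite /ell; have -> : (r == 2 * t) = false by apply/eqP; lia.
    have H := @lower_gen n (2 * t - 3) 7 t 1 cyc7 pats7 Ht erefl
      ltac:(clear -Hn Hr Ht; lia) ok7.
    have -> : 2 * r - 1 = 2 * (2 * t - 3) + 7 by clear -Hr Ht; lia.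
    have -> : r = 2 * t + 1 by clear -Hr; lia.
    apply: leq_trans H; apply: arith_gen => //.
    rewrite !big_cons big_nil /=; lia.
split => // n Hn.
have Hr2 : 2 <= r by case: Hr; lia.
have [E1 E2] := N_eq_I n Hr2.
split => //; rewrite E1; apply: key; lia.
Qed.
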